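(* For every $t\in\mathbb{N}$ and $C>0$ there is $\varepsilon_0>0$ such that the following holds for every integer $m\ge 3$. If $0<\varepsilon<\varepsilon_0$ and $\mathcal{G},\mathcal{H}\subset[m]^n$ satisfy $\mu(\mathcal{H})=m^{-t}\varepsilon$ and $\mu(\mathcal{G})>1-C\varepsilon$, then ${\sf agr}(x,y)=0$ for some $x\in\mathcal{G}$ and $y\in\mathcal{H}$.
   Context: $[m]=\{1,\dots,m\}$, $\mu$ is the uniform probability measure on $[m]^n$, and ${\sf agr}(x,y)=|\{i\in[n]:x_i=y_i\}|$. *)

(* Defs.v *)
From mathcomp Require Import all_boot all_order all_algebra.
From mathcomp Require Import reals.
Set Implicit Arguments. Unset Strict Implicit. Unset Printing Implicit Defensive.
Import Order.TTheory GRing.Theory Num.Theory.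
Local Open Scope ring_scope.

(* The cube [m]^n, with [m] represented by 'I_m = {0,...,m-1}. *)
Definition cube (m n : nat) := {ffun 'I_n -> 'I_m}.

Definition mu (R : realType) (m n : nat) (A : {set cube m n}) : R :=
  (#|A|%:R) / ((m ^ n)%N%:R).

Definition agr (m n : nat) (x y : cube m n) : nat :=
  #|[set i : 'I_n | x i == y i]|.

(* Main.v *)
Require Import Defs.
From mathcomp Require Import all_boot all_order all_algebra.
From mathcomp Require Import reals.
From mathcomp Require Import ring lra zify.
Import Order.TTheory GRing.Theory Num.Theory.
Local Open Scope ring_scope.

Lemma bern (R : realDomainType) (X e : R) n : 0 <= e -> e <= X ->
  X ^+ n.+1 - n.+1%:R * e * X ^+ n <= (X - e) ^+ n.+1.
Proof.
move=> e0 eX; elim: n => [|n IH]; first by rewrite expr1 expr0 mulr1 mul1r.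
rewrite [(X - e) ^+ n.+2]exprS.
have hXe : 0 <= X - e by rewrite subr_ge0.
apply: le_trans (ler_wpM2l hXe IH).
have hP : 0 <= X ^+ n by apply: exprn_ge0; exact: le_trans eX.
rewrite !exprS -subr_ge0.
set P := X ^+ n.
have -> : (X - e) * (X * P - n.+1%:R * e * P) - (X * (X * P) - n.+2%:R * e * (X * P))
   = n.+1%:R * (e * e) * P.
  rewrite -!natr1; ring.
by rewrite mulr_ge0 // mulr_ge0 // mulr_ge0.
Qed.

Lemma keyR (R : realDomainType) k (a b : R) : 0 <= b -> b <= a ->
  (k.+1%:R) ^+ k.-1 * (a ^+ k + k%:R * b ^+ k) <= (k%:R * a + b) ^+ k.
Proof.
move=> b0 ba; case: k => [|k] /=; first by rewrite !expr0 mul0r addr0 mulr1.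
have a0 : 0 <= a by exact: le_trans ba.
have := @bern R (k.+2%:R * a) (a - b) k.
rewrite subr_ge0 ba => /(_ isT).
have -> : k.+2%:R * a - (a - b) = k.+1%:R * a + b by rewrite -!natr1; ring.
move=> H; apply: le_trans (H _); last first.
  have : 0 <= k.+1%:R * a by rewrite mulr_ge0.
  rewrite -(natr1 k.+1); lra.
have hb : b ^+ k <= a ^+ k by apply: lerXn2r.
rewrite exprMn -subr_ge0.
rewrite !exprS exprMn.
have -> : k.+2%:R * k.+2%:R ^+ k * (a * a ^+ k) - k.+1%:R * (a - b) * (k.+2%:R ^+ k * a ^+ k) -
  k.+2%:R ^+ k * (a * a ^+ k + k.+1%:R * (b * b ^+ k))
   = k.+2%:R ^+ k * k.+1%:R * b * (a ^+ k - b ^+ k).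
  rewrite -!natr1; ring.
by rewrite !mulr_ge0 ?subr_ge0 // exprn_ge0.
Qed.

Lemma keyN k (A B : nat) : (B <= A)%N ->
  (k.+1 ^ k.-1 * (A ^ k + k * B ^ k) <= (k * A + B) ^ k)%N.
Proof.
move=> BA; rewrite -(ler_nat int) !natrM !natrX !natrD !natrM !natrX.
by apply: keyR; rewrite ?ler0n ?ler_nat.
Qed.

Set Implicit Arguments. Unset Strict Implicit.
Local Close Scope ring_scope.

Definition nbr m n (H : {set cube m n}) : {set cube m n} :=
  [set x | [exists y in H, agr x y == 0%N]].

Lemma agr0P m n (x y : cube m n) : reflect (forall i, x i != y i) (agr x y == 0%N).
Proof.
apply: (iffP eqP) => [h i|h].
  by have := card0_eq h i; rewrite !inE => /negbT.
by apply: eq_card0 => i; rewrite !inE; apply/negbTE/h.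
Qed.

Definition ccons m n (a : 'I_m) (x : cube m n) : cube m n.+1 :=
  [ffun i => if unlift ord0 i is Some j then x j else a].
Definition ctail m n (x : cube m n.+1) : cube m n := [ffun j => x (lift ord0 j)].

Lemma ccons0 m n a (x : cube m n) : ccons a x ord0 = a.
Proof. by rewrite ffunE unlift_none. Qed.
Lemma cconsS m n a (x : cube m n) j : ccons a x (lift ord0 j) = x j.
Proof. by rewrite ffunE liftK. Qed.
Lemma cconsK m n (x : cube m n.+1) : ccons (x ord0) (ctail x) = x.
Proof. by apply/ffunP=> i; rewrite ffunE; case: unliftP => [j ->|->] //; rewrite ffunE. Qed.
Lemma ctailK m n a (x : cube m n) : ctail (ccons a x) = x.
Proof. by apply/ffunP=> j; rewrite ffunE cconsS. Qed.

Lemma card_slice m n (A : {set cube m n.+1}) :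
  #|A| = \sum_(a : 'I_m) #|[set x | ccons a x \in A]|.
Proof.
rewrite -sum1_card (reindex (fun p : 'I_m * cube m n => ccons p.1 p.2)) /=; last first.
  exists (fun x : cube m n.+1 => (x ord0, ctail x)) => [[a x] _|x _] /=; first by rewrite ccons0 ctailK.
  exact: cconsK.
rewrite -(pair_big_dep xpredT (fun a x => ccons a x \in A) (fun _ _ => 1%N)) /=.
by apply: eq_bigr => a _; rewrite sum1dep_card.
Qed.

Lemma lexp (a b e : nat) : (a <= b)%N -> (a ^ e <= b ^ e)%N.
Proof. by case: e => // e ab; rewrite leq_exp2r. Qed.

Lemma claim k n (H : {set cube k.+1 n}) :
  (#|H| * (k.+1 ^ n) ^ k.-1 <= #|nbr H| ^ k)%N.
Proof.
elim: n H => [|n IH] H.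
  case: (set_0Vmem H) => [->|[y yH]]; first by rewrite cards0.
  have -> : nbr H = setT.
    apply/setP => x; rewrite !inE; apply/existsP; exists y; rewrite yH /=.
    by apply/agr0P => -[].
  rewrite cardsT card_ffun !card_ord expn0 exp1n muln1.
  have -> : #|H| = 1%N.
    apply/eqP; rewrite eqn_leq; apply/andP; split; last by rewrite card_gt0; apply/set0Pn; exists y.
    by have := max_card (mem H); rewrite card_ffun !card_ord expn0.
  by rewrite exp1n.
pose hs a := [set x | ccons a x \in H].
pose av a := #|nbr (hs a)|.
pose sN b := #|[set x | ccons b x \in nbr H]|.
have hsub : forall a b, a != b -> (av a <= sN b)%N.
  move=> a b ab; apply: subset_leq_card; apply/subsetP => x.
  rewrite !inE => /existsP [y /andP [yH /agr0P hy]].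
  apply/existsP; exists (ccons a y); rewrite inE in yH; rewrite yH /=.
  apply/agr0P => i; case: (unliftP ord0 i) => [j ->|->].
    by rewrite !cconsS.
  by rewrite !ccons0 eq_sym.
have [b0 _ Hmax] := @arg_maxnP _ ord0 xpredT av isT.
set A := av b0 in Hmax *.
pose B := minn (sN b0) A.
have hB : forall b, b != b0 -> (av b <= B)%N.
  by move=> b bb0; rewrite leq_min hsub //=; apply: Hmax.
have hN : (k * A + B <= #|nbr H|)%N.
  rewrite (card_slice (nbr H)) (bigD1 b0) //= (addnC (k * A)); apply: leq_add; first exact: geq_minl.
  have -> : (k * A = \sum_(b | b != b0) A)%N by rewrite sum_nat_const cardC1 card_ord mulnC.
  by apply: leq_sum => b hb; apply: hsub; rewrite eq_sym.
have hsum : (\sum_a #|hs a| * (k.+1 ^ n) ^ k.-1 <= A ^ k + k * B ^ k)%N.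
  rewrite (bigD1 b0) //=; apply: leq_add; first exact: IH.
  have -> : (k * B ^ k = \sum_(b | b != b0) B ^ k)%N by rewrite sum_nat_const cardC1 card_ord.
  apply: leq_sum => b hb.
  have h1 := IH (hs b).
  have h2 : (#|nbr (hs b)| ^ k <= B ^ k)%N := lexp k (hB b hb).
  have h3 := leq_trans h1 h2.
  exact h3.
have hH : (#|H| * (k.+1 ^ n.+1) ^ k.-1 <= k.+1 ^ k.-1 * (A ^ k + k * B ^ k))%N.
  rewrite (card_slice H) big_distrl /= expnS expnMn.
  rewrite (eq_bigr (fun a => k.+1 ^ k.-1 * (#|hs a| * (k.+1 ^ n) ^ k.-1)))%N; last first.
    by move=> a _; rewrite mulnCA.
  by rewrite -big_distrr leq_mul2l hsum orbT.
apply: (leq_trans hH); apply: (leq_trans (@keyN k A B (geq_minr (sN b0) A))).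
by apply: lexp.
Qed.

Unset Implicit Arguments. Set Strict Implicit.
Local Open Scope ring_scope.

Theorem theorem2p3 (R : realType) (t : nat) (C : R) (hC : 0 < C) :
  exists eps0 : R, 0 < eps0 /\
    forall (m n : nat), (3 <= m)%N ->
    forall (eps : R), 0 < eps -> eps < eps0 ->
    forall (G H : {set cube m n}),
      mu R H = eps / ((m%:R : R) ^+ t) ->
      mu R G > 1 - C * eps ->
      exists x, exists y, [/\ x \in G, y \in H & agr x y = 0%N].
Proof.
pose u : R := 2%:R ^+ t.
have u1 : 1 <= u by rewrite exprn_ege1 // ler1n.
have u0 : 0 < u by apply: lt_le_trans ltr01 u1.
exists (1 / (C * (C + 1) * u ^+ 2)); split.
  by rewrite divr_gt0 // !mulr_gt0 // ?addr_gt0 // exprn_gt0.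
move=> m n; case: m => [//|k] hk eps e0 elt G H hH hG.
case: (boolP [exists x in G, [exists y in H, agr x y == 0%N]]).
  move=> /existsP [x /andP [xG /existsP [y /andP [yH /eqP h]]]].
  by exists x, y.
move=> hne; exfalso.
have hdisj : (#|G| + #|nbr H| <= k.+1 ^ n)%N.
  rewrite -cardsUI.
  have -> : G :&: nbr H = set0.
    apply/setP => x; rewrite !inE; apply/negP => /andP [xG /existsP [y /andP [yH hy]]].
    apply: (negP hne); apply/existsP; exists x; rewrite xG /=.
    by apply/existsP; exists y; rewrite yH.
  rewrite cards0 addn0.
  by have := max_card (mem (G :|: nbr H)); rewrite card_ffun !card_ord.
have hc := claim H.
rewrite /mu in hH hG.
set Mr : R := ((k.+1 ^ n)%N)%:R in hH hG.
have Mr0 : 0 < Mr by rewrite ltr0n expn_gt0.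
have hdR : (#|G|%:R + #|nbr H|%:R <= Mr :> R) by rewrite -natrD ler_nat.
have hcR : (#|H|%:R * Mr ^+ k.-1 <= (#|nbr H|%:R) ^+ k :> R).
  by rewrite /Mr -!natrX -natrM ler_nat.
set h : R := #|H|%:R in hH hcR.
set g : R := #|G|%:R in hG hdR.
set nu : R := #|nbr H|%:R in hdR hcR.
have nu0 : 0 <= nu by rewrite ler0n.
set mr : R := k.+1%:R in hH.
have mr0 : 0 < mr ^+ t by rewrite exprn_gt0 // ltr0n.
have hh : h = eps / mr ^+ t * Mr by rewrite -hH divfK // gt_eqF.
have hg : (1 - C * eps) * Mr < g by rewrite -ltr_pdivlMr.
have hnu : nu < C * eps * Mr by move: hg hdR; rewrite mulrBl mul1r; lra.
have hk0 : k != 0%N by move: hk; clear; lia.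
have hX : nu ^+ k < (C * eps * Mr) ^+ k by rewrite ltrXn2r.
have : eps / mr ^+ t * Mr ^+ k < (C * eps) ^+ k * Mr ^+ k.
  apply: le_lt_trans _ (lt_le_trans hX _); last by rewrite exprMn.
  apply: le_trans _ hcR; by rewrite hh -[eps / _ * Mr * _]mulrA -exprS prednK // lt0n.
rewrite ltr_pM2r ?exprn_gt0 // ltr_pdivrMr //.
have kj : k = (k - 2)%N.+2 by move: hk; clear; lia.
move: (k - 2)%N kj => j kj.
have hmr : mr ^+ t <= u ^+ j.+2.
  rewrite /u -exprM mulnC exprM; apply: lerXn2r; rewrite ?nnegrE ?ler0n ?exprn_ge0 //.
  by rewrite /mr kj -natrX ler_nat ltn_expl.
rewrite kj => hlt.
set d := C * eps in hlt.
have d0 : 0 < d by rewrite mulr_gt0.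
have hde : d * ((C + 1) * u ^+ 2) < 1.
  have := elt; rewrite ltr_pdivlMr ?mulr_gt0 ?addr_gt0 ?exprn_gt0 //.
  by rewrite /d; congr (_ < _); ring.
have hdu : d * u <= 1.
  have hcu : 1 <= (C + 1) * u by move: hC u1; clear; nra.
  have := ler_wpM2l (mulr_ge0 (ltW d0) (ltW u0)) hcu.
  have -> : d * u * ((C + 1) * u) = d * ((C + 1) * u ^+ 2) by ring.
  rewrite mulr1 => hh'; exact: le_trans hh' (ltW hde).
have hpow : (d * u) ^+ j <= 1.
  exact: exprn_ile1 (mulr_ge0 (ltW d0) (ltW u0)) hdu.
have h1 : d ^+ j.+2 * mr ^+ t <= (d * u) ^+ 2.
  apply: le_trans (ler_wpM2l (exprn_ge0 _ (ltW d0)) hmr) _.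
  rewrite -exprMn -addn2 exprD; apply: ler_piMl => //.
  by apply: exprn_ge0; exact: mulr_ge0 (ltW d0) (ltW u0).
have h2 : C * (d * u ^+ 2) < 1.
  apply: le_lt_trans hde; rewrite mulrCA ler_pM2l // mulrDl mul1r lerDl.
  by apply: exprn_ge0; exact: ltW.
have h3 : eps < C * eps * (d * u ^+ 2).
  apply: lt_le_trans hlt (le_trans h1 _); rewrite /d le_eqVlt; apply/orP; left; apply/eqP; ring.
have : 0 < eps * (1 - C * (d * u ^+ 2)) by rewrite mulr_gt0 // subr_gt0.
move: h3; set w := d * u ^+ 2; clear; move=> h3 h4; nra.
Qed.
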